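(* For all integers $d\ge 3$ and $0\le j\le \left\lfloor \frac{3(d-1)}{2}\right\rfloor$, $$\operatorname{sign}(d,j)=\operatorname{triv}(d-2,j-3).$$
   Context: $\Bbbk$ is an algebraically closed field of characteristic $0$. For an integer $d\ge 1$, $A(d)=\Bbbk[x_1,x_2,x_3]/(x_1^d,x_2^d,x_3^d)=\bigoplus_j A(d)_j$ with its standard grading, where $A(d)_j=0$ for $j<0$ (so $A(1)=\Bbbk$ in degree $0$). $S_3$ acts on $A(d)$ by permuting variables. The linear map $E:A(d)_{j+1}\to A(d)_j$ is defined on the monomial basis by $E(x_1^{a_1}x_2^{a_2}x_3^{a_3})=\sum_{k=1}^{3} a_k(d-a_k)\,x_1^{a_1}\cdots x_k^{a_k-1}\cdots x_3^{a_3}$; it commutes with the $S_3$-action. $\operatorname{triv}(d,j)$ and $\operatorname{sign}(d,j)$ denote the multiplicities of the trivial and sign representations of $S_3$ in $\operatorname{Ker}(E)\cap A(d)_j$ (zero when $j<0$). *)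

(* Defs.v *)
From HB Require Import structures.
From mathcomp Require Import all_boot all_order all_algebra all_fingroup.
Set Implicit Arguments. Unset Strict Implicit. Unset Printing Implicit Defensive.
Import GRing.Theory Num.Theory.
Local Open Scope ring_scope.

(* Monomials x1^a1 x2^a2 x3^a3 of A(d) = k[x1,x2,x3]/(x1^d,x2^d,x3^d):
   exponent vectors a : 'I_3 -> 'I_d (i.e. 0 <= a_k < d).  These form a
   basis of A(d); A(d) is modelled as row vectors of length #|Mon d|,
   coordinates indexed via enum_val. *)
Definition Mon (d : nat) := {ffun 'I_3 -> 'I_d}.
Definition N (d : nat) : nat := #|{ffun 'I_3 -> 'I_d}|.
Definition mon (d : nat) (i : 'I_(N d)) : Mon d := enum_val i.
Definition deg (d : nat) (m : Mon d) : nat := (\sum_(k < 3) (m k : nat))%N.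

(* S_3 acts by permuting variables: s . x_t = x_(s t), so the exponent of
   x_u in s . m is the exponent of x_(s^-1 u) in m. *)
Definition act (d : nat) (m : Mon d) (s : 'S_3) : Mon d := [ffun u => m ((s^-1)%g u)].

Section Mats.
Variable F : fieldType.

(* Matrix of E (row-vector convention: v *m Emx = E v).
   E(x^a) = sum_k a_k (d - a_k) x^(a - e_k). *)
Definition Emx (d : nat) : 'M[F]_(N d) :=
  \matrix_(i, l) \sum_(k < 3)
     (if (0 < (mon i k : nat))%N &&
         [forall t : 'I_3, (mon l t : nat) ==
                            (if t == k then (mon i t).-1 else mon i t)]
      then (((mon i k : nat) * (d - mon i k))%N)%:R else 0).

Definition Pmx (d : nat) (s : 'S_3) : 'M[F]_(N d) :=
  \matrix_(i, l) ((mon l == act (mon i) s) : nat)%:R.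

(* Projection-like diagonal matrix whose row space is A(d)_j
   (zero when j < 0). *)
Definition Dmx (d : nat) (j : int) : 'M[F]_(N d) :=
  diag_mx (\row_i (((deg (mon i))%:Z == j) : nat)%:R).

Definition KerEj (d : nat) (j : int) : 'M[F]_(N d) :=
  (Dmx d j :&: kermx (Emx d))%MS.

Definition isotypic (d : nat) (chi : 'S_3 -> F) : 'M[F]_(N d) :=
  (\bigcap_(s : 'S_3) kermx (Pmx d s - (chi s)%:M))%MS.

Definition sgnF (s : 'S_3) : F := (-1) ^+ (odd_perm s).

(* Multiplicity of a 1-dim irreducible = dim Hom_{S3}(chi, V) = dim of the
   chi-isotypic subspace of V. *)
Definition triv (d : nat) (j : int) : nat :=
  \rank (KerEj d j :&: isotypic d (fun _ => 1))%MS.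
Definition sign (d : nat) (j : int) : nat :=
  \rank (KerEj d j :&: isotypic d sgnF)%MS.

End Mats.

(* Main.v *)
Require Import Defs.
From HB Require Import structures.
From mathcomp Require Import all_boot all_order all_algebra all_fingroup zify.
Import GRing.Theory Num.Theory.
Set Implicit Arguments. Unset Strict Implicit. Unset Printing Implicit Defensive.


Section Abstract.
Local Open Scope ring_scope.
Variable F : fieldType.
Variable n : nat.
Implicit Types A B D : 'M[F]_n.

Fixpoint pmx (rs : seq F) A : 'M[F]_n :=
  if rs is c :: rs' then (A - c%:M) *m pmx rs' A else 1%:M.

Lemma smxD (a b : F) : (a + b)%:M = a%:M + b%:M :> 'M[F]_n.
Proof. exact: raddfD. Qed.

Lemma pmx_comm D A B rs : D *m A = B *m D -> D *m pmx rs A = pmx rs B *m D.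
Proof.
move=> DA; elim: rs => [|c rs IH] /=; first by rewrite mulmx1 mul1mx.
by rewrite mulmxA mulmxBr DA mul_mx_scalar -mul_scalar_mx -mulmxBl -!mulmxA IH.
Qed.

Lemma pmx_shift rs h A : pmx [seq c + h | c <- rs] A = pmx rs (A - h%:M).
Proof. elim: rs => [|c rs IH] /=; first by []. by rewrite IH smxD opprD addrA addrAC. Qed.

Lemma pmx_inv rs A m (w : 'M[F]_(m, n)) : all (fun c => c != 0) rs ->
  w *m pmx rs A = 0 ->
  exists R, w = w *m A *m R /\ (forall B, B *m A = A *m B -> B *m R = R *m B).
Proof.
elim: rs w => [|c rs IH] w /=.
  move=> _; rewrite mulmx1 => ->; exists 0; split; first by rewrite mulmx0.
  by move=> B _; rewrite mulmx0 mul0mx.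
case/andP=> c0 rs0; rewrite mulmxA => /(IH _ rs0) [R' [eR' cR']].
set X := A - c%:M.
have AX : A *m X = X *m A.
  by rewrite /X mulmxBr mulmxBl scalar_mxC.
exists (c^-1 *: (1%:M - X *m R')); split.
  rewrite -scalemxAr mulmxBr mulmx1 !mulmxA -(mulmxA w A X) AX mulmxA -eR'.
  rewrite /X mulmxBr mul_mx_scalar opprB addrC subrK scalerA mulVf // scale1r.
  by [].
move=> B BA; rewrite -scalemxAr -scalemxAl; congr (_ *: _).
have BX : B *m X = X *m B by rewrite /X mulmxBr mulmxBl BA scalar_mxC.
clearbody X; rewrite mulmxBr mulmxBl mulmx1 mul1mx.
by rewrite mulmxA BX -!mulmxA cR' // (mulmxA X).
Qed.

Variables (E L : 'M[F]_n) (Dm : int -> 'M[F]_n) (hh : nat -> F).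
Hypothesis HE : forall i, Dm i *m E = E *m Dm (i - 1).
Hypothesis HL : forall i, Dm i *m L = L *m Dm (i + 1).
Hypothesis HT : forall i : nat, Dm i *m (L *m E) = (E *m L + (hh i)%:M) *m Dm i.
Hypothesis H0 : Dm (-1) = 0.

Fixpoint rts (i : nat) : seq F :=
  if i is i'.+1 then hh i' :: [seq c + hh i' | c <- rts i'] else [::].

Lemma DT k : Dm k *m (L *m E) = (L *m E) *m Dm k.
Proof. by rewrite mulmxA HL -mulmxA HE addrK mulmxA. Qed.

Lemma annih i : Dm (i%:Z - 1) *m pmx (rts i) (L *m E) = 0.
Proof.
elim: i => [|i IH]; first by rewrite /= H0 mul0mx.
have -> : (i.+1)%:Z - 1 = i by rewrite -[i.+1]addn1 PoszD addrK.
rewrite (pmx_comm _ (HT i)) /= pmx_shift addrK.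
have LS : L *m (E *m L) = (L *m E) *m L by rewrite mulmxA.
rewrite -(mulmxA E) (pmx_comm _ LS) -!mulmxA.
have -> : L *m Dm i = Dm (i%:Z - 1) *m L by rewrite HL subrK.
rewrite (mulmxA (pmx _ _)) -(pmx_comm _ (DT _)) IH.
by rewrite mul0mx mulmx0.
Qed.

Hypothesis Hchar : forall p, (0 < p)%N -> p%:R != 0 :> F.

Lemma rts_pos j : (forall k, (k < j)%N -> exists2 p, (0 < p)%N & hh k = p%:R) ->
  all (fun c => c != 0) (rts j).
Proof.
move=> Hp.
suff : forall c, c \in rts j -> exists2 p, (0 < p)%N & c = p%:R.
  move=> H; apply/allP=> c /H [p p0 ->]; exact: Hchar.
elim: j Hp => [|j IH] Hp c //=.
have [p p0 ep] := Hp j (ltnSn j).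
rewrite inE => /orP [/eqP -> | /mapP [c' /IH IH' ->]]; first by exists p.
have [|q q0 ->] := IH' => [k kj|]; first by apply: Hp; exact: ltnW.
by exists (q + p)%N; rewrite ?addn_gt0 ?q0 // natrD ep.
Qed.

Variables (I : finType) (Pf : I -> 'M[F]_n).
Hypothesis HPE : forall s, Pf s *m E = E *m Pf s.
Hypothesis HPL : forall s, Pf s *m L = L *m Pf s.

Definition Iso := (\bigcap_(s : I) kermx (Pf s))%MS.

Lemma ker_formula j : (forall k, (k < j)%N -> exists2 p, (0 < p)%N & hh k = p%:R) ->
  \rank ((Dm j :&: kermx E) :&: Iso)%MS =
  (\rank (Dm j :&: Iso)%MS - \rank (Dm (j%:Z - 1) :&: Iso)%MS)%N.
Proof.
move=> Hp.
set A := (Dm j :&: Iso)%MS; set W := (Dm (j%:Z - 1) :&: Iso)%MS.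
have eA : ((Dm j :&: kermx E) :&: Iso = A :&: kermx E)%MS.
  by rewrite -capmxA (capmxC (kermx E)) capmxA.
have AE : (A *m E <= W)%MS.
  rewrite sub_capmx; apply/andP; split.
    have /submxP [X ->] : (A <= Dm j)%MS by exact: capmxSl.
    by rewrite -mulmxA HE mulmxA submxMl.
  apply/sub_bigcapmxP => s _; apply/sub_kermxP.
  have : (A <= kermx (Pf s))%MS.
    apply: submx_trans (capmxSr _ _) _; exact: (bigcapmx_inf _ (erefl true)) .
  by move/sub_kermxP; rewrite -mulmxA -HPE mulmxA => ->; rewrite mul0mx.
have WA : (W <= A *m E)%MS.
  have /submxP [X eW] : (W <= Dm (j%:Z - 1))%MS by exact: capmxSl.
  have W0 : W *m pmx (rts j) (L *m E) = 0 by rewrite eW -mulmxA annih mulmx0.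
  have [R [eR cR]] := pmx_inv (rts_pos Hp) W0.
  have WK s : W *m Pf s = 0.
    apply/sub_kermxP; apply: submx_trans (capmxSr _ _) _.
    exact: (bigcapmx_inf _ (erefl true)).
  have PT s : Pf s *m (L *m E) = (L *m E) *m Pf s.
    by rewrite mulmxA HPL -!mulmxA HPE.
  set V := W *m R *m L.
  have eV : W = V *m E by rewrite {1}eR -mulmxA cR // /V !mulmxA.
  have VA : (V <= A)%MS.
    rewrite sub_capmx; apply/andP; split.
      rewrite /V eW -(mulmxA X) cR; last by rewrite DT.
      by rewrite -!mulmxA HL subrK !mulmxA submxMl.
    apply/sub_bigcapmxP => s _; apply/sub_kermxP.
    by rewrite /V -!mulmxA -HPL (mulmxA R) -(cR _ (PT s)) !mulmxA WK !mul0mx.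
  have /submxP [Z eZ] := VA.
  by rewrite eV eZ -mulmxA submxMl.
have rAE : \rank (A *m E) = \rank W.
  by apply/eqP; rewrite eqn_leq !mxrankS.
by rewrite eA -(mxrank_mul_ker A E) rAE addKn.
Qed.
End Abstract.


Section Frame.
Local Open Scope ring_scope.
Variable F : fieldType.
Variable d : nat.
Local Notation M := {ffun 'I_3 -> 'I_d}.

Lemma sum_mon (G : M -> F) : \sum_(i < N d) G (mon i) = \sum_(m : M) G m.
Proof. by rewrite (big_enum_val G). Qed.

Lemma mon_inj : injective (@mon d).
Proof. exact: enum_val_inj. Qed.

Definition MX (f : M -> M -> F) : 'M[F]_(N d) := \matrix_(i, l) f (mon i) (mon l).

Lemma MXM f g : MX f *m MX g = MX (fun a b => \sum_p f a p * g p b).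
Proof. apply/matrixP=> i l; rewrite !mxE.
rewrite -(sum_mon (fun p => f (mon i) p * g p (mon l))).
by apply: eq_bigr => k _; rewrite !mxE.
Qed.

Lemma MXD f g : MX f + MX g = MX (fun a b => f a b + g a b).
Proof. by apply/matrixP=> i l; rewrite !mxE. Qed.

Lemma MX_ext f g : (forall a b, f a b = g a b) -> MX f = MX g.
Proof. by move=> H; apply/matrixP=> i l; rewrite !mxE. Qed.

Lemma MX_scalar (c : F) : c%:M = MX (fun a b => (a == b)%:R * c).
Proof.
apply/matrixP=> i l; rewrite !mxE (inj_eq mon_inj).
by case: (i == l); rewrite ?mul1r ?mul0r.
Qed.

Lemma Emx_MX : Emx F d = MX (fun a b => \sum_(k < 3)
     (if (0 < (a k : nat))%N &&
         [forall t : 'I_3, (b t : nat) == (if t == k then (a t).-1 else a t)]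
      then (((a k : nat) * (d - a k))%N)%:R else 0)).
Proof. by apply/matrixP=> i l; rewrite !mxE. Qed.

Lemma Pmx_MX (s : 'S_3) : Pmx F d s = MX (fun a b => (b == Defs.act a s)%:R).
Proof. by apply/matrixP=> i l; rewrite !mxE. Qed.

Lemma Dmx_MX j : Dmx F d j = MX (fun a b => (a == b)%:R * ((deg a)%:Z == j)%:R).
Proof.
apply/matrixP=> i l; rewrite !mxE (inj_eq mon_inj).
case: (i =P l) => [->|_]; first by rewrite mulr1n mul1r eq_sym.
by rewrite mulr0n mul0r.
Qed.

Lemma sum_pick (G : M -> F) (q : M) (b : bool) :
  \sum_p (b && (p == q))%:R * G p = b%:R * G q.
Proof.
rewrite (bigD1 q) //= eqxx andbT big1 ?addr0 // => p /negbTE ->.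
by rewrite andbF mul0r.
Qed.

Lemma sum_pick1 (G : M -> F) (q : M) :
  \sum_p (p == q)%:R * G p = G q.
Proof. by have := sum_pick G q true; under eq_bigr do rewrite andTb; rewrite mul1r. Qed.

End Frame.

Section Pick.
Local Open Scope ring_scope.
Variable F : fieldType.
Variable d : nat.
Local Notation M := {ffun 'I_3 -> 'I_d}.
Lemma sum_pick1E (G : M -> F) q (X : M -> F) :
  (forall p, X p = (p == q)%:R * G p) -> \sum_p X p = G q.
Proof. by move=> H; rewrite (eq_bigr _ (fun p _ => H p)) sum_pick1. Qed.
Lemma sum_pickE (G : M -> F) q b (X : M -> F) :
  (forall p, X p = (b && (p == q))%:R * G p) -> \sum_p X p = b%:R * G q.
Proof. by move=> H; rewrite (eq_bigr _ (fun p _ => H p)) sum_pick. Qed.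
End Pick.


Section Conc.
Local Open Scope ring_scope.
Variable F : fieldType.
Variable n : nat.
Local Notation M := {ffun 'I_3 -> 'I_n.+1}.
Implicit Types (a b c p : M) (k t : 'I_3).

Lemma eqM (a b : M) : (a == b) = [forall t, (a t : nat) == b t].
Proof.
apply/eqP/forallP => [-> t //|H]; apply/ffunP => t; apply/val_inj/eqP; exact: H.
Qed.

Definition lower (a : M) k : M := [ffun t => if t == k then inord (a t).-1 else a t].
Definition raise (a : M) k : M := [ffun t => if t == k then inord (a t).+1 else a t].

Lemma lower_val a k t : (lower a k t : nat) = if t == k then (a t).-1 else a t.
Proof.
rewrite ffunE; case: eqP => _ //; rewrite inordK //.
by have := ltn_ord (a t); lia.
Qed.

Lemma raise_val a k t : (a k < n)%N -> (raise a k t : nat) = if t == k then (a t).+1 else a t.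
Proof.
move=> ak; rewrite ffunE; case: eqP => [->|_] //; rewrite inordK //.
Qed.

Definition coef (a : M) k : F := ((a k : nat) * (n.+1 - a k))%N%:R.
Definition Ef (a b : M) : F := \sum_(k < 3) (b == lower a k)%:R * coef a k.
Definition Lf (a b : M) : F := \sum_(k < 3) ((a k < n)%N && (b == raise a k))%:R.
Definition Hf (a b : M) : F := (a == b)%:R * ((3 * n)%:R - (2 * deg a)%:R).

Lemma Emx_Ef : Emx F n.+1 = MX Ef.
Proof.
rewrite Emx_MX; apply: MX_ext => a b; apply: eq_bigr => k _.
rewrite /coef; case: (posnP (a k)) => [->|ak]; first by rewrite /= mul0n mulr0.
rewrite /= eqM; set P := [forall t, _]; set Q := [forall t, _].
have -> : P = Q.
  apply: eq_forallb => t; by rewrite lower_val.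
by case: Q; rewrite ?mul1r ?mul0r.
Qed.


Lemma deg_lower a k : (0 < a k)%N -> (deg (lower a k)).+1 = deg a.
Proof.
move=> ak; rewrite /deg (bigD1 k) //= [in RHS](bigD1 k) //= lower_val eqxx.
rewrite (eq_bigr (fun t => (a t : nat))); first by lia.
by move=> t /negbTE tk; rewrite lower_val tk.
Qed.

Lemma deg_raise a k : (a k < n)%N -> deg (raise a k) = (deg a).+1.
Proof.
move=> ak; rewrite /deg (bigD1 k) //= [in RHS](bigD1 k) //= raise_val // eqxx.
rewrite (eq_bigr (fun t => (a t : nat))); first by lia.
by move=> t /negbTE tk; rewrite raise_val // tk.
Qed.

Lemma lower_raise a k k' : k != k' -> (a k < n)%N ->
  lower (raise a k) k' = raise (lower a k') k.
Proof.
move=> kk' ak; have ak' : (lower a k' k < n)%N by rewrite lower_val (negbTE kk').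
apply/eqP; rewrite eqM; apply/forallP => t.
rewrite lower_val !raise_val // !lower_val.
case: (t =P k) => [->|_]; first by rewrite (negbTE kk').
by case: (t =P k').
Qed.

Lemma lower_raise_same a k : (a k < n)%N -> lower (raise a k) k = a.
Proof.
move=> ak; apply/eqP; rewrite eqM; apply/forallP => t.
by rewrite lower_val !raise_val //; case: (t =P k) => [->|].
Qed.

Lemma raise_lower_same a k : (0 < a k)%N -> raise (lower a k) k = a.
Proof.
move=> ak; have ak' : (lower a k k < n)%N.
  by rewrite lower_val eqxx; have := ltn_ord (a k); lia.
apply/eqP; rewrite eqM; apply/forallP => t.
rewrite raise_val // !lower_val; case: (t =P k) => [->|] //.
lia.
Qed.

Lemma sumLE a c : \sum_p Lf a p * Ef p c =
   \sum_k ((a k < n)%N)%:R * Ef (raise a k) c.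
Proof.
rewrite /Lf; under eq_bigr do rewrite big_distrl /=.
rewrite exchange_big /=; apply: eq_bigr => k _; exact: sum_pick.
Qed.

Lemma sumEL a c : \sum_p Ef a p * Lf p c =
   \sum_k coef a k * Lf (lower a k) c.
Proof.
rewrite /Ef; under eq_bigr do rewrite big_distrl /=.
rewrite exchange_big /=; apply: eq_bigr => k _.
under eq_bigr do rewrite -mulrA.
by rewrite (sum_pick1 (fun p => coef a k * Lf p c)).
Qed.


Lemma Hf_sum a c : Hf a c = \sum_k (a == c)%:R * (n%:R - (2 * a k)%N%:R).
Proof.
rewrite /Hf -big_distrr /=; congr (_ * _).
rewrite sumrB sumr_const card_ord -natr_sum -big_distrr /= -mulr_natl natrM.
by rewrite mulr_natl /deg mulr1.
Qed.

Lemma diag_pt a c k :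
  ((a k < n)%N)%:R * ((c == lower (raise a k) k)%:R * coef (raise a k) k) =
  coef a k * ((lower a k k < n)%N && (c == raise (lower a k) k))%:R +
  (a == c)%:R * (n%:R - (2 * a k)%N%:R).
Proof.
have akn : (a k <= n)%N by have := ltn_ord (a k); lia.
have Hk : forall x : nat, (x <= n)%N -> 
  ((x < n)%N * (x.+1 * (n - x)) + 2 * x = x * (n.+1 - x) + n)%N.
  move=> x xn; case: (ltnP x n) => xn' /=; nia.
have eX : forall c0, ((a k < n)%N)%:R * ((c0 == lower (raise a k) k)%:R * coef (raise a k) k)
    = ((c0 == a) * ((a k < n)%N * ((a k).+1 * (n - a k))))%N%:R.
  move=> c0; case: (ltnP (a k) n) => xn /=.
    rewrite lower_raise_same // /coef raise_val // eqxx subSS mul1r.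
    by rewrite mul1n [RHS]natrM.
  by rewrite mul0n muln0 mul0r.
have eY : forall c1, coef a k * ((lower a k k < n)%N && (c1 == raise (lower a k) k))%:R
    = ((c1 == a) * (a k * (n.+1 - a k)))%N%:R.
  move=> c1; case: (posnP (a k)) => x0.
    by rewrite /coef x0 !mul0n muln0 mul0r.
  rewrite raise_lower_same // lower_val eqxx.
  rewrite /= /coef; have -> : ((a k).-1 < n)%N by lia.
  by rewrite /= [RHS]natrM mulrC.
rewrite eX eY.
case: (c =P a) => [->|ca].
  rewrite eqxx !mul1n mul1r.
  apply: (addIr (2 * a k)%N%:R); rewrite -natrD Hk // natrD.
  by rewrite -addrA subrK.
have -> : (a == c) = false by apply/eqP => e; apply: ca; rewrite e.
by rewrite !mul0n mul0r addr0.
Qed.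


Lemma off_pt a c k k' : k' != k ->
  ((a k < n)%N)%:R * ((c == lower (raise a k) k')%:R * coef (raise a k) k') =
  coef a k' * ((lower a k' k < n)%N && (c == raise (lower a k') k))%:R.
Proof.
move=> kk'; have kk : k != k' by rewrite eq_sym.
rewrite lower_val (negbTE kk).
case: (ltnP (a k) n) => xn /=; last by rewrite !mul0r mulr0.
rewrite lower_raise // mul1r mulrC /coef raise_val // (negbTE kk').
by [].
Qed.

Lemma LE_pt a c : \sum_p Lf a p * Ef p c = \sum_p Ef a p * Lf p c + Hf a c.
Proof.
rewrite sumLE sumEL Hf_sum /Ef /Lf.
under eq_bigr do rewrite big_distrr /=.
under [X in X + _]eq_bigr do rewrite big_distrr /=.
rewrite [X in X + _]exchange_big /= -big_split /=.
apply: eq_bigr => k _.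
rewrite [LHS](bigD1 k) //= [in RHS](bigD1 k) //= -addrA [_ + (_ * _)]addrC addrA.
rewrite diag_pt -!addrA; congr (_ + (_ + _)).
by apply: eq_bigr => k' kk'; rewrite off_pt.
Qed.

End Conc.


Section Rel.
Local Open Scope ring_scope.
Variable F : fieldType.
Variable n : nat.
Local Notation M := {ffun 'I_3 -> 'I_n.+1}.
Implicit Types (a b c p : M) (k t : 'I_3).
Local Notation Ef := (@Ef F n).
Local Notation Lf := (@Lf F n).
Local Notation Hf := (@Hf F n).
Local Notation coef := (@coef F n).

Definition Df (i : int) a b : F := (a == b)%:R * ((deg a)%:Z == i)%:R.

Lemma sumDl i a (f : M -> F) : \sum_p Df i a p * f p = ((deg a)%:Z == i)%:R * f a.
Proof.
apply: (etrans _ (sum_pick1 (fun p => ((deg a)%:Z == i)%:R * f p) a)).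
apply: eq_bigr => p _; rewrite /Df eq_sym.
by case: (p =P a) => [->|]; rewrite ?mul1r ?mul0r.
Qed.

Lemma sumDr i c (f : M -> F) : \sum_p f p * Df i p c = f c * ((deg c)%:Z == i)%:R.
Proof.
apply: (etrans _ (sum_pick1 (fun p => f p * ((deg p)%:Z == i)%:R) c)).
apply: eq_bigr => p _; rewrite /Df.
by case: (p =P c) => [->|]; rewrite ?mul1r ?mul0r ?mulr0.
Qed.

Lemma eq_shift (x i : int) : (x + 1 == i) = (x == i - 1).
Proof. exact: (can2_eq (addrK 1) (subrK 1)). Qed.

Lemma HE_pt i a c : \sum_p Df i a p * Ef p c = \sum_p Ef a p * Df (i - 1) p c.
Proof.
rewrite sumDl sumDr /Ef big_distrr big_distrl /=; apply: eq_bigr => k _.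
case: (c =P lower a k) => [->|]; last by rewrite !mul0r mulr0.
case: (posnP (a k)) => x0; first by rewrite /coef x0 mul0n !mulr0 mul0r.
have e : (deg a)%:Z = (deg (lower a k))%:Z + 1 by rewrite -(deg_lower x0) -addn1 PoszD.
by rewrite e eq_shift mulrC.
Qed.

Lemma HL_pt i a c : \sum_p Df i a p * Lf p c = \sum_p Lf a p * Df (i + 1) p c.
Proof.
rewrite sumDl sumDr /Lf big_distrr big_distrl /=; apply: eq_bigr => k _.
case: (ltnP (a k) n) => xn /=; last by rewrite !mul0r mulr0.
case: (c =P raise a k) => [->|]; last by rewrite !mulr0 mul0r.
have e : (deg (raise a k))%:Z = (deg a)%:Z + 1 by rewrite deg_raise // -addn1 PoszD.
by rewrite e (inj_eq (addIr 1)) mulrC.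
Qed.

Lemma HH_pt (i : nat) a c : \sum_p Df i a p * Hf p c =
  \sum_p ((a == p)%:R * ((3 * n)%:R - (2 * i)%:R)) * Df i p c.
Proof.
rewrite sumDl; set h : F := _ - _.
transitivity (h * Df i a c); last first.
  symmetry; apply: (etrans _ (sum_pick1 (fun p => h * Df i p c) a)).
  by apply: eq_bigr => p _; rewrite eq_sym mulrA.
rewrite /Hf /Df; case: eqP => [[->]|_]; last by rewrite !mul0r !mulr0.
by rewrite /h mul1r mulr1 mulrC.
Qed.

Lemma Dm_neg a : ((deg a)%:Z == -1) = false.
Proof. by []. Qed.

Lemma sinv_eq (s : 'S_3) t k : ((s^-1)%g t == k) = (t == s k).
Proof. by apply/eqP/eqP => [<-|->]; rewrite ?permKV ?permK. Qed.

Lemma act_val a (s : 'S_3) t : Defs.act a s t = a ((s^-1)%g t).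
Proof. by rewrite ffunE. Qed.

Lemma lower_act a (s : 'S_3) k : lower (Defs.act a s) (s k) = Defs.act (lower a k) s.
Proof.
apply/ffunP => t; rewrite !ffunE sinv_eq.
by case: eqP => _ //; rewrite ffunE.
Qed.

Lemma raise_act a (s : 'S_3) k : raise (Defs.act a s) (s k) = Defs.act (raise a k) s.
Proof.
apply/ffunP => t; rewrite !ffunE sinv_eq.
by case: eqP => _ //; rewrite ffunE.
Qed.

Lemma act_s a (s : 'S_3) k : Defs.act a s (s k) = a k.
Proof. by rewrite act_val permK. Qed.

Lemma deg_act a (s : 'S_3) : deg (Defs.act a s) = deg a.
Proof.
rewrite /deg (reindex_inj (@perm_inj _ s)) /=.
by apply: eq_bigr => k _; rewrite act_s.
Qed.

Lemma PE_pt (s : 'S_3) a c : \sum_p (p == Defs.act a s)%:R * Ef p c =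
  \sum_p Ef a p * (c == Defs.act p s)%:R.
Proof.
rewrite sum_pick1 /Ef; under [RHS]eq_bigr do rewrite big_distrl /=.
rewrite exchange_big /= (reindex_inj (@perm_inj _ s)) /=; apply: eq_bigr => k _.
rewrite (@sum_pick1E _ _ (fun p => (c == Defs.act p s)%:R * coef a k) (lower a k)); last first.
  by move=> p; rewrite -mulrA (mulrC (coef a k)).
by rewrite lower_act /coef act_s.
Qed.

Lemma PL_pt (s : 'S_3) a c : \sum_p (p == Defs.act a s)%:R * Lf p c =
  \sum_p Lf a p * (c == Defs.act p s)%:R.
Proof.
rewrite sum_pick1 /Lf; under [RHS]eq_bigr do rewrite big_distrl /=.
rewrite exchange_big /= (reindex_inj (@perm_inj _ s)) /=; apply: eq_bigr => k _.
rewrite (@sum_pickE _ _ (fun p => (c == Defs.act p s)%:R) (raise a k) (a k < n)%N) //.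
by rewrite raise_act act_s; case: (_ < _)%N; rewrite ?mul1r ?mul0r.
Qed.

End Rel.


Section Mat.
Local Open Scope ring_scope.
Variable F : fieldType.
Variable n : nat.
Local Notation d := n.+1.
Local Notation E := (Emx F d).
Local Notation Dm := (Dmx F d).
Definition Lmx : 'M[F]_(N d) := MX (@Lf F n).
Local Notation L := Lmx.
Definition hh (i : nat) : F := (3 * n)%:R - (2 * i)%:R.

Lemma HEm i : Dm i *m E = E *m Dm (i - 1).
Proof. by rewrite !Dmx_MX Emx_Ef !MXM; apply: MX_ext => a c; exact: HE_pt. Qed.

Lemma HLm i : Dm i *m L = L *m Dm (i + 1).
Proof. by rewrite !Dmx_MX /Lmx !MXM; apply: MX_ext => a c; exact: HL_pt. Qed.

Lemma LEm : L *m E = E *m L + MX (@Hf F n).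
Proof. by rewrite /Lmx Emx_Ef !MXM MXD; apply: MX_ext => a c; exact: LE_pt. Qed.

Lemma DHm (i : nat) : Dm i *m MX (@Hf F n) = (hh i)%:M *m Dm i.
Proof. by rewrite !Dmx_MX MX_scalar !MXM; apply: MX_ext => a c; exact: HH_pt. Qed.

Lemma HTm (i : nat) : Dm i *m (L *m E) = (E *m L + (hh i)%:M) *m Dm i.
Proof.
rewrite LEm mulmxDr mulmxDl DHm; congr (_ + _).
by rewrite mulmxA HEm -mulmxA HLm subrK mulmxA.
Qed.

Lemma H0m : Dm (-1) = 0.
Proof. by rewrite Dmx_MX; apply/matrixP => i l; rewrite !mxE Dm_neg mulr0. Qed.

Lemma PEm s : Pmx F d s *m E = E *m Pmx F d s.
Proof. by rewrite !Pmx_MX Emx_Ef !MXM; apply: MX_ext => a c; exact: PE_pt. Qed.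

Lemma PLm s : Pmx F d s *m L = L *m Pmx F d s.
Proof. by rewrite !Pmx_MX /Lmx !MXM; apply: MX_ext => a c; exact: PL_pt. Qed.

Lemma kerF (chi : 'S_3 -> F) (j : nat) :
  (forall p, (0 < p)%N -> p%:R != 0 :> F) ->
  (j <= (3 * n) %/ 2)%N ->
  \rank (KerEj F d j :&: isotypic d chi)%MS =
  (\rank (Dm j :&: isotypic d chi)%MS - \rank (Dm (j%:Z - 1) :&: isotypic d chi)%MS)%N.
Proof.
move=> Hc hj.
have := @ker_formula F (N d) E L Dm hh HEm HLm HTm H0m Hc _
   (fun s => Pmx F d s - (chi s)%:M) _ _ j.
apply.
- by move=> s; rewrite mulmxBl mulmxBr PEm scalar_mxC.
- by move=> s; rewrite mulmxBl mulmxBr PLm scalar_mxC.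
- move=> k kj; exists (3 * n - 2 * k)%N; first by lia.
  by rewrite natrB //; lia.
Qed.
End Mat.


Definition o0 : 'I_3 := ord0.
Definition o1 : 'I_3 := lift ord0 ord0.
Definition o2 : 'I_3 := lift ord0 (lift ord0 ord0).

Lemma ord3P (t : 'I_3) : [\/ t = o0, t = o1 | t = o2].
Proof.
case: t => [[|[|[|m]]] Hm]; last by [].
- by apply: Or31; apply: val_inj.
- by apply: Or32; apply: val_inj.
- by apply: Or33; apply: val_inj.
Qed.

Section Comb.
Local Open Scope ring_scope.
Variable d : nat.
Local Notation M := {ffun 'I_3 -> 'I_d}.
Implicit Types (x y : M) (s : 'S_3).

Lemma deg3 x : deg x = (x o0 + x o1 + x o2)%N.
Proof. by rewrite /deg !big_ord_recl big_ord0 addn0 addnA. Qed.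

Definition wdec x := (x o1 <= x o0)%N && (x o2 <= x o1)%N.
Definition sdec x := (x o1 < x o0)%N && (x o2 < x o1)%N.

Lemma actE x s t : Defs.act x s t = x ((s^-1)%g t).
Proof. by rewrite ffunE. Qed.

Lemma act_mul x s u : Defs.act (Defs.act x s) u = Defs.act x (s * u)%g.
Proof. by apply/ffunP => t; rewrite !actE invMg permM. Qed.

Lemma act1 x : Defs.act x 1%g = x.
Proof. by apply/ffunP => t; rewrite actE invg1 perm1. Qed.

Lemma deg_act' x s : deg (Defs.act x s) = deg x.
Proof.
rewrite /deg (reindex_inj (@perm_inj _ s)) /=.
by apply: eq_bigr => k _; rewrite actE permK.
Qed.

Lemma wdec_max x t : wdec x -> (x t <= x o0)%N.
Proof. by case/andP; case: (ord3P t) => ->; lia. Qed.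

Lemma wdec_min x t : wdec x -> (x o2 <= x t)%N.
Proof. by case/andP; case: (ord3P t) => ->; lia. Qed.

Lemma wdec_uniq x s : wdec x -> wdec (Defs.act x s) -> Defs.act x s = x.
Proof.
move=> wx wy; set y := Defs.act x s.
have y0 : (y o0 : nat) = x o0.
  apply/eqP; rewrite eqn_leq; apply/andP; split.
    by rewrite /y actE wdec_max.
  have := wdec_max (s o0) wy; by rewrite /y !actE permK.
have y2 : (y o2 : nat) = x o2.
  apply/eqP; rewrite eqn_leq; apply/andP; split.
    have := wdec_min (s o2) wy; by rewrite /y !actE permK.
  by rewrite /y actE wdec_min.
have dy : deg y = deg x by rewrite /y deg_act'.
have y1 : (y o1 : nat) = x o1 by move: dy; rewrite !deg3; lia.
apply/ffunP => t; apply: val_inj; by case: (ord3P t) => ->.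
Qed.


Definition ev := (permM, tpermL, tpermR, tpermD).

Lemma sortP x : exists s, wdec (Defs.act x s).
Proof.
suff [sg H] : exists sg : 'S_3, (x (sg o1) <= x (sg o0))%N && (x (sg o2) <= x (sg o1))%N.
  by exists sg^-1%g; rewrite /wdec !actE invgK.
case: (leqP (x o1) (x o0)) => h01; case: (leqP (x o2) (x o1)) => h12;
  case: (leqP (x o2) (x o0)) => h02.
- by exists 1%g; rewrite !perm1; apply/andP; split; lia.
- by exists 1%g; rewrite !perm1; apply/andP; split; lia.
- by exists (tperm o1 o2); rewrite ?perm1 ?permM !permE /=; apply/andP; split; lia.
- by exists (tperm o0 o1 * tperm o1 o2)%g; rewrite ?perm1 ?permM !permE /=; apply/andP; split; lia.
- by exists (tperm o0 o1); rewrite ?perm1 ?permM !permE /=; apply/andP; split; lia.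
- by exists (tperm o1 o2 * tperm o0 o1)%g; rewrite ?perm1 ?permM !permE /=; apply/andP; split; lia.
- by exists (tperm o0 o1); rewrite ?perm1 ?permM !permE /=; apply/andP; split; lia.
- by exists (tperm o0 o2); rewrite ?perm1 ?permM !permE /=; apply/andP; split; lia.
Qed.


Definition distinct x := [&& (x o0 : nat) != x o1, (x o1 : nat) != x o2 & (x o0 : nat) != x o2].

Lemma distinct_inj x : distinct x -> forall u v, (x u : nat) = x v -> u = v.
Proof.
case/and3P => /eqP h1 /eqP h2 /eqP h3 u v.
case: (ord3P u) => ->; case: (ord3P v) => -> //; lia.
Qed.

Lemma inj_act x s : (forall u v, (x u : nat) = x v -> u = v) ->
  forall u v, (Defs.act x s u : nat) = Defs.act x s v -> u = v.
Proof. by move=> H u v; rewrite !actE => /H /perm_inj. Qed.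

Lemma wdec_sdec x : wdec x -> (forall u v, (x u : nat) = x v -> u = v) -> sdec x.
Proof.
case/andP => h1 h2 H; apply/andP; split; rewrite ltn_neqAle ?h1 ?h2 andbT;
  apply/negP => /eqP /H //.
Qed.

Lemma rep_tperm x : ~~ distinct x -> exists2 u : 'I_3, true &
   exists2 v : 'I_3, u != v & Defs.act x (tperm u v) = x.
Proof.
rewrite /distinct; case: eqP => [h|_] /=.
  exists o0 => //; exists o1 => //; apply/ffunP => t; rewrite actE tpermV.
  by apply: val_inj; case: (ord3P t) => ->; rewrite !permE /=.
case: eqP => [h|_] /=.
  exists o1 => //; exists o2 => //; apply/ffunP => t; rewrite actE tpermV.
  by apply: val_inj; case: (ord3P t) => ->; rewrite !permE /=.
case: eqP => [h|_] //= _.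
exists o0 => //; exists o2 => //; apply/ffunP => t; rewrite actE tpermV.
by apply: val_inj; case: (ord3P t) => ->; rewrite !permE /=.
Qed.

Lemma sdec_uniq x s : sdec x -> sdec (Defs.act x s) -> s = 1%g.
Proof.
move=> sx sy.
have wx : wdec x by case/andP: sx => h1 h2; rewrite /wdec ltnW // ltnW.
have wy : wdec (Defs.act x s) by case/andP: sy => h1 h2; rewrite /wdec ltnW // ltnW.
have e := wdec_uniq wx wy.
have ix : forall u v, (x u : nat) = x v -> u = v.
  apply: distinct_inj; case/andP: sx => h1 h2; rewrite /distinct; apply/and3P; split;
   apply/eqP; lia.
apply/permP => t; rewrite perm1.
have : (Defs.act x s (s t) : nat) = x (s t) by rewrite e.
by rewrite actE permK => /ix.
Qed.

End Comb.

Lemma o1v : bump 0 0 = 1%N. Proof. by []. Qed.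
Lemma o2v : bump 0 (bump 0 0) = 2%N. Proof. by []. Qed.

Section Shift.
Local Open Scope ring_scope.
Variable n : nat.
Definition shift (b : {ffun 'I_3 -> 'I_n.+1}) : {ffun 'I_3 -> 'I_n.+3} :=
  [ffun t => inord (b t + (2 - t))].

Lemma shift_val b t : (shift b t : nat) = (b t + (2 - t))%N.
Proof. rewrite ffunE inordK //; have := ltn_ord (b t); have := ltn_ord t; lia. Qed.

Lemma shift_sdec b : wdec b -> sdec (shift b).
Proof. by case/andP => h1 h2; rewrite /sdec !shift_val /= ?o2v ?o1v; apply/andP; split; lia. Qed.

Lemma shift_inj : injective shift.
Proof.
move=> b b' e; apply/ffunP => t; apply: val_inj.
have : (shift b t : nat) = shift b' t by rewrite e.
rewrite !shift_val; by case: (ord3P t) => -> /=; rewrite ?o2v ?o1v; lia.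
Qed.

Lemma deg_shift b : deg (shift b) = (deg b + 3)%N.
Proof. by rewrite !deg3 !shift_val /= ?o2v ?o1v; lia. Qed.

Lemma sdec_shift a : sdec a -> exists2 b, wdec b & a = shift b.
Proof.
case/andP => h1 h2.
set bb : {ffun 'I_3 -> 'I_n.+1} := [ffun t => inord (a t - (2 - t))].
have bv t : (bb t : nat) = (a t - (2 - t))%N.
  by rewrite ffunE inordK //; have := ltn_ord (a o0); case: (ord3P t) => -> /=; rewrite ?o2v ?o1v; lia.
exists bb.
  by rewrite /wdec !bv /= ?o2v ?o1v; apply/andP; split; lia.
apply/ffunP => t; apply: val_inj => /=; rewrite shift_val bv.
by case: (ord3P t) => -> /=; rewrite ?o2v ?o1v; lia.
Qed.
End Shift.


Section Gen.
Local Open Scope ring_scope.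
Variable F : fieldType.

Definition MX2 d1 d2 (f : Mon d1 -> Mon d2 -> F) : 'M[F]_(N d1, N d2) :=
  \matrix_(i, l) f (mon i) (mon l).

Definition er d (p : Mon d) : 'I_(N d) := enum_rank p.

Lemma mon_er d (p : Mon d) : mon (er p) = p.
Proof. exact: enum_rankK. Qed.

Lemma er_mon d (i : 'I_(N d)) : er (mon i) = i.
Proof. exact: enum_valK. Qed.

Lemma mulMX2 d1 d2 r (X : 'M[F]_(r, N d1)) (f : Mon d1 -> Mon d2 -> F) i l :
  (X *m MX2 f) i l = \sum_(p : Mon d1) X i (er p) * f p (mon l).
Proof.
rewrite !mxE -(sum_mon (fun p : Mon d1 => X i (er p) * f p (mon l))).
by apply: eq_bigr => k _; rewrite mxE er_mon.
Qed.

Lemma MX2M d1 d2 d3 (f : Mon d1 -> Mon d2 -> F) (g : Mon d2 -> Mon d3 -> F) :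
  MX2 f *m MX2 g = MX2 (fun a c => \sum_p f a p * g p c).
Proof.
apply/matrixP => i l; rewrite mulMX2 mxE; apply: eq_bigr => p _.
by rewrite mxE mon_er.
Qed.

Lemma MX2_ext d1 d2 (f g : Mon d1 -> Mon d2 -> F) :
  (forall a b, f a b = g a b) -> MX2 f = MX2 g.
Proof. by move=> H; apply/matrixP=> i l; rewrite !mxE. Qed.

Lemma act_eq d (c p : Mon d) s : (c == Defs.act p s) = (p == Defs.act c (s^-1)%g).
Proof.
by apply/eqP/eqP => [->|->]; apply/ffunP => t; rewrite !actE invgK ?permK ?permKV.
Qed.

Lemma mulP d r (Y : 'M[F]_(r, N d)) s i c :
  (Y *m Pmx F d s) i (er c) = Y i (er (Defs.act c (s^-1)%g)).
Proof.
have -> : Pmx F d s = MX2 (fun a b => (b == Defs.act a s)%:R).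
  by apply/matrixP => k l; rewrite !mxE.
rewrite mulMX2 mon_er.
apply: (@sum_pick1E _ _ (fun p => Y i (er p))) => p.
by rewrite act_eq mulrC.
Qed.

Lemma iso_row d r (X : 'M[F]_(r, N d)) chi :
  (X <= isotypic d chi)%MS -> forall i c s,
  X i (er (Defs.act c s)) = chi (s^-1)%g * X i (er c).
Proof.
move=> /sub_bigcapmxP H i c s.
have /sub_kermxP : (X <= kermx (Pmx F d (s^-1)%g - (chi (s^-1)%g)%:M))%MS by exact: H.
rewrite mulmxBr mul_mx_scalar => /eqP; rewrite subr_eq0 => /eqP e.
by have := congr1 (fun M : 'M[F]_(r, N d) => M i (er c)) e; rewrite /= mulP invgK mxE.
Qed.


Lemma Pmx_MX2 d s : Pmx F d s = MX2 (fun a b => (b == Defs.act a s)%:R).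
Proof. by apply/matrixP => k l; rewrite !mxE. Qed.

Lemma PmxM d s t : Pmx F d s *m Pmx F d t = Pmx F d (s * t)%g.
Proof.
rewrite !Pmx_MX2 MX2M; apply: MX2_ext => a c.
rewrite -act_mul; apply: (@sum_pick1E _ _ (fun p => (c == Defs.act p t)%:R)) => p.
by rewrite mulrC.
Qed.

Definition Symd d := \sum_(s : 'S_3) Pmx F d s.
Definition Altd d := \sum_(s : 'S_3) sgnF F s *: Pmx F d s.

Lemma SymP d t : Symd d *m Pmx F d t = Symd d.
Proof.
rewrite /Symd mulmx_suml; under eq_bigr do rewrite PmxM.
by rewrite [RHS](reindex_inj (mulIg t)).
Qed.

Lemma sgnFM s t : sgnF F (s * t)%g = sgnF F s * sgnF F t.
Proof. by rewrite /sgnF odd_permM signr_addb. Qed.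

Lemma sgnF2 s : sgnF F s * sgnF F s = 1.
Proof. by rewrite /sgnF -signr_addb addbb. Qed.

Lemma sgnFV s : sgnF F (s^-1)%g = sgnF F s.
Proof. by rewrite /sgnF odd_permV. Qed.

Lemma AltP d t : Altd d *m Pmx F d t = sgnF F t *: Altd d.
Proof.
rewrite /Altd mulmx_suml scaler_sumr.
under eq_bigr do rewrite -scalemxAl PmxM.
rewrite [RHS](reindex_inj (mulIg t)) /=; apply: eq_bigr => s _.
by rewrite scalerA sgnFM mulrA (mulrC (sgnF F t)) -mulrA sgnF2 mulr1.
Qed.

Lemma DP d j s : Dmx F d j *m Pmx F d s = Pmx F d s *m Dmx F d j.
Proof.
have -> : Dmx F d j = MX2 (fun a b => (a == b)%:R * ((deg a)%:Z == j)%:R).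
  by rewrite Dmx_MX.
rewrite Pmx_MX2 !MX2M; apply: MX2_ext => a c.
rewrite (@sum_pick1E _ _ (fun p => ((deg a)%:Z == j)%:R * (c == Defs.act p s)%:R) a); last first.
  by move=> p; rewrite eq_sym mulrA.
rewrite (@sum_pick1E _ _ (fun p => (p == c)%:R * ((deg p)%:Z == j)%:R) (Defs.act a s)) //.
by rewrite deg_act' mulrC eq_sym.
Qed.

Lemma iso_of d r (Y : 'M[F]_(r, N d)) chi :
  (forall s, Y *m Pmx F d s = chi s *: Y) -> (Y <= isotypic d chi)%MS.
Proof.
move=> H; apply/sub_bigcapmxP => s _; apply/sub_kermxP.
by rewrite mulmxBr H mul_mx_scalar subrr.
Qed.

End Gen.


Section P2.
Local Open Scope ring_scope.
Variable F : fieldType.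
Hypothesis Hc : forall p, (0 < p)%N -> p%:R != 0 :> F.
Variable n : nat.
Local Notation db := n.+3.
Local Notation ds := n.+1.

Definition Phi0 : 'M[F]_(N db, N ds) :=
  MX2 (fun (a : Mon db) (b : Mon ds) => (wdec b && (a == shift b))%:R).
Definition Psi0 : 'M[F]_(N ds, N db) :=
  MX2 (fun (b : Mon ds) (a : Mon db) => (wdec b && (a == shift b))%:R).

Lemma XPhi0 r (X : 'M[F]_(r, N db)) i c :
  (X *m Phi0) i (er c) = (wdec c)%:R * X i (er (shift c)).
Proof.
rewrite mulMX2 mon_er.
apply: (@sum_pickE _ _ (fun a => X i (er a))) => p; exact: mulrC.
Qed.

Lemma XPsi0 r (X : 'M[F]_(r, N ds)) i a :
  (X *m Psi0) i (er a) = \sum_(b : Mon ds) (wdec b && (a == shift b))%:R * X i (er b).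
Proof. by rewrite mulMX2 mon_er; apply: eq_bigr => b _; rewrite mulrC. Qed.

Lemma YSym d r (Y : 'M[F]_(r, N d)) i c :
  (Y *m Symd F d) i (er c) = \sum_(s : 'S_3) Y i (er (Defs.act c s)).
Proof.
rewrite /Symd mulmx_sumr summxE.
under eq_bigr do rewrite mulP.
by rewrite (reindex_inj invg_inj) /=; apply: eq_bigr => s _; rewrite invgK.
Qed.

Lemma YAlt d r (Y : 'M[F]_(r, N d)) i c :
  (Y *m Altd F d) i (er c) = \sum_(s : 'S_3) sgnF F s * Y i (er (Defs.act c s)).
Proof.
rewrite /Altd mulmx_sumr summxE.
under eq_bigr do rewrite -scalemxAr mxE mulP.
by rewrite (reindex_inj invg_inj) /=; apply: eq_bigr => s _; rewrite invgK sgnFV.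
Qed.


Definition Phi := Phi0 *m Symd F ds.
Definition Psi := Psi0 *m Altd F db.

Lemma act1g d (x : Mon d) : Defs.act x (1%g : 'S_3) = x.
Proof. by apply/ffunP => t; rewrite actE invg1 perm1. Qed.

Lemma X0 d r (X : 'M[F]_(r, N d)) : (forall i c, X i (er c) = 0) -> X = 0.
Proof. by move=> H; apply/matrixP => i l; rewrite -(er_mon l) H mxE. Qed.

Lemma sgnF_neq0 s : sgnF F s != 0.
Proof. by rewrite /sgnF signr_eq0. Qed.

Lemma a2 (U : 'M[F]_(N db)) : (U <= isotypic db (sgnF F))%MS -> (U :&: kermx Phi = 0)%MS.
Proof.
move=> Uiso; set X := (U :&: kermx Phi)%MS.
have Xiso : (X <= isotypic db (sgnF F))%MS by apply: submx_trans Uiso; exact: capmxSl.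
have XK : X *m Phi = 0 by apply/sub_kermxP; exact: capmxSr.
have hX := iso_row Xiso.
apply: X0 => i.
have hb : forall b, wdec b -> X i (er (shift b)) = 0.
  move=> b wb.
  have : (X *m Phi) i (er b) = 0 by rewrite XK mxE.
  rewrite /Phi mulmxA YSym.
  under eq_bigr do rewrite XPhi0.
  have e : forall s, (wdec (Defs.act b s))%:R * X i (er (shift (Defs.act b s))) =
     (wdec (Defs.act b s))%:R * X i (er (shift b)).
    move=> s; case: (boolP (wdec (Defs.act b s))) => w; last by rewrite !mul0r.
    by rewrite wdec_uniq.
  under eq_bigr do rewrite e.
  rewrite -mulr_suml -natr_sum => /eqP; rewrite mulf_eq0 => /orP [|/eqP //].
  rewrite (bigD1 (1%g : 'S_3)) //= act1g wb; move/eqP => h; exfalso; move: h; apply/eqP.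
  by apply: Hc.
move=> a; case: (boolP (distinct a)) => da.
  have [s ws] := sortP a.
  have sd := wdec_sdec ws (@inj_act _ a s (distinct_inj da)).
  have [b wb eb] := sdec_shift sd.
  have := hX i a s; rewrite eb hb // => /esym /eqP; rewrite mulf_eq0.
  by rewrite (negbTE (sgnF_neq0 _)) => /eqP.
have [u _ [v uv ea]] := rep_tperm da.
have := hX i a (tperm u v); rewrite ea tpermV /sgnF odd_tperm uv expr1 mulN1r.
move/eqP; rewrite -subr_eq0 opprK -mulr2n -mulr_natr mulf_eq0 => /orP [/eqP //|].
by move/eqP => h; exfalso; move: h; apply/eqP; apply: Hc.
Qed.


Lemma b2 (W : 'M[F]_(N ds)) : (W <= isotypic ds (fun _ => 1))%MS -> (W :&: kermx Psi = 0)%MS.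
Proof.
move=> Wiso; set X := (W :&: kermx Psi)%MS.
have Xiso : (X <= isotypic ds (fun _ => 1))%MS by apply: submx_trans Wiso; exact: capmxSl.
have XK : X *m Psi = 0 by apply/sub_kermxP; exact: capmxSr.
have hX := iso_row Xiso.
apply: X0 => i.
have hb : forall b, wdec b -> X i (er b) = 0.
  move=> b wb.
  have : (X *m Psi) i (er (shift b)) = 0 by rewrite XK mxE.
  rewrite /Psi mulmxA YAlt.
  under eq_bigr do rewrite XPsi0.
  rewrite (bigD1 (1%g : 'S_3)) //= act1g => h.
  rewrite [X in _ + X]big1 ?addr0 in h; last first.
    move=> s s1; rewrite big1 ?mulr0 // => b' _.
    case: (boolP (wdec b' && _)) => [/andP [wb' /eqP e]|]; last by rewrite mul0r.
    exfalso; move/negP: s1; apply; apply/eqP.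
    by apply: (sdec_uniq (shift_sdec wb)); rewrite e; apply: shift_sdec.
  rewrite (@sum_pickE _ _ (fun b' => X i (er b')) b (wdec b)) in h; last first.
    move=> b'; case: (b' =P b) => [->|nb]; first by rewrite eqxx andbT.
    rewrite andbF; case: eqP => [e|]; last by rewrite andbF.
    by exfalso; apply: nb; apply: shift_inj.
  by rewrite wb /sgnF odd_perm1 expr0 !mul1r in h.
move=> c; have [s ws] := sortP c.
by have := hX i c s; rewrite mul1r hb.
Qed.


Lemma Dmx_MX2 d j : Dmx F d j = MX2 (fun a b => (a == b)%:R * ((deg a)%:Z == j)%:R).
Proof. by rewrite Dmx_MX. Qed.

Lemma eq_shift3 (x i : int) : (x + 3 == i) = (x == i - 3).
Proof. exact: (can2_eq (addrK 3) (subrK 3)). Qed.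

Lemma deg_shiftZ (c : Mon ds) : (deg (shift c))%:Z = (deg c)%:Z + 3.
Proof. by rewrite deg_shift PoszD. Qed.

Lemma DPhi0 j : Dmx F db j *m Phi0 = Phi0 *m Dmx F ds (j - 3).
Proof.
rewrite !Dmx_MX2 /Phi0 !MX2M; apply: MX2_ext => a c.
rewrite (@sum_pick1E _ _ (fun p => ((deg a)%:Z == j)%:R * (wdec c && (p == shift c))%:R) a); last first.
  by move=> p; rewrite eq_sym mulrA.
rewrite (@sum_pick1E _ _ (fun p => (wdec c && (a == shift p))%:R * ((deg p)%:Z == j - 3)%:R) c); last first.
  by move=> p; case: (p =P c) => [->|_]; rewrite ?mul1r ?mul0r ?mulr0 /= ?mul0r ?mulr0.
case: (boolP (wdec c && (a == shift c))) => [/andP [_ /eqP ->]|]; last by rewrite !mul0r mulr0.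
by rewrite deg_shiftZ eq_shift3 mulrC.
Qed.

Lemma DPsi0 j : Dmx F ds (j - 3) *m Psi0 = Psi0 *m Dmx F db j.
Proof.
rewrite !Dmx_MX2 /Psi0 !MX2M; apply: MX2_ext => c a.
rewrite (@sum_pick1E _ _ (fun p => ((deg c)%:Z == j - 3)%:R * (wdec p && (a == shift p))%:R) c); last first.
  by move=> p; rewrite eq_sym mulrA.
rewrite (@sum_pick1E _ _ (fun p => (wdec c && (p == shift c))%:R * ((deg p)%:Z == j)%:R) a); last first.
  by move=> p; case: (p =P a) => [->|_]; rewrite ?mul1r ?mul0r ?mulr0 /= ?mul0r ?mulr0.
case: (boolP (wdec c && (a == shift c))) => [/andP [_ /eqP ->]|]; last by rewrite !mul0r mulr0.
by rewrite deg_shiftZ eq_shift3 mulrC.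
Qed.


Lemma DSym d j : Dmx F d j *m Symd F d = Symd F d *m Dmx F d j.
Proof.
rewrite /Symd mulmx_sumr mulmx_suml; apply: eq_bigr => s _; exact: DP.
Qed.

Lemma DAlt d j : Dmx F d j *m Altd F d = Altd F d *m Dmx F d j.
Proof.
rewrite /Altd mulmx_sumr mulmx_suml; apply: eq_bigr => s _.
by rewrite -scalemxAr -scalemxAl DP.
Qed.

Local Notation U j := (Dmx F db j :&: isotypic db (sgnF F))%MS.
Local Notation W j := (Dmx F ds (j - 3) :&: isotypic ds (fun _ => 1 : F))%MS.

Lemma a1 j : (U j *m Phi <= W j)%MS.
Proof.
rewrite sub_capmx; apply/andP; split.
  have /submxP [X ->] : (U j <= Dmx F db j)%MS by exact: capmxSl.
  by rewrite /Phi !mulmxA -(mulmxA X) DPhi0 mulmxA -(mulmxA (X *m Phi0)) DSym mulmxA submxMl.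
apply: iso_of => s; rewrite /Phi -!mulmxA SymP scale1r //.
Qed.

Lemma b1 j : (W j *m Psi <= U j)%MS.
Proof.
rewrite sub_capmx; apply/andP; split.
  have /submxP [X ->] : (W j <= Dmx F ds (j - 3))%MS by exact: capmxSl.
  by rewrite /Psi !mulmxA -(mulmxA X) DPsi0 mulmxA -(mulmxA (X *m Psi0)) DAlt mulmxA submxMl.
apply: iso_of => s; rewrite /Psi -!mulmxA AltP -!scalemxAr //.
Qed.

Lemma part2 j : \rank (U j) = \rank (W j).
Proof.
apply/eqP; rewrite eqn_leq; apply/andP; split.
  rewrite -(mxrank_mul_ker (U j) Phi) a2 ?capmxSr // mxrank0 addn0.
  exact: mxrankS (a1 j).
rewrite -(mxrank_mul_ker (W j) Psi) b2 ?capmxSr // mxrank0 addn0.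
exact: mxrankS (b1 j).
Qed.

End P2.


Unset Implicit Arguments.
Lemma Dmx_neg (F : fieldType) d (k : int) : (k < 0)%R -> Dmx F d k = 0%R.
Proof.
move=> k0; rewrite Dmx_MX; apply/matrixP => i l; rewrite !mxE.
have -> : (Posz (deg (mon i)) == k) = false.
  by apply/negbTE/eqP => e; move: k0; rewrite -e.
by rewrite GRing.mulr0.
Qed.

Theorem proposition4p1 (F : closedFieldType) (HF : [pchar F]%R =i pred0)
  (d j : nat) :
  (3 <= d)%N -> (j <= (3 * (d - 1)) %/ 2)%N ->
  sign F d (Posz j) = triv F (d - 2) (Posz j - 3)%R.
Proof.
move=> d3 hj.
have Hc : forall p, (0 < p)%N -> (p%:R != 0 :> F)%R.
  by move=> p p0; move/pcharf0P: HF => ->; rewrite -lt0n.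
case: d d3 hj => [|[|[|n]]] // _ hj.
have -> : (n.+3 - 2 = n.+1)%N by lia.
rewrite /sign (@kerF F n.+2 (sgnF F) j Hc); last by move: hj; rewrite subn1.
rewrite (part2 Hc) (part2 Hc).
rewrite /triv.
case: (leqP 3 j) => j3.
  have -> : (Posz j - 3)%R = Posz (j - 3) by lia.
  rewrite (@kerF F n (fun _ => 1%R) (j - 3) Hc); last by move: hj; lia.
  by have -> : ((Posz j - 1) - 3 = Posz (j - 3) - 1)%R by lia.
rewrite /KerEj !(@Dmx_neg F n.+1) ?cap0mx ?mxrank0 //; lia.
Qed.
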